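(* Let $A, M, F \in \mathbb{C}^{n\times n}$ with $M$ and $F$ nonsingular, and let $I$ be the $n\times n$ identity matrix. Suppose $A$ is an $\mathsf H$-matrix and \[ \langle M\rangle - |M - A| = \langle A\rangle, \qquad \langle F\rangle - |F - A| = \langle A\rangle. \] Then \[ \rho\left(\left| I - F^{-1}(M + F - A) M^{-1} A \right|\right) < 1. \]
   Context: For a matrix $\mathcal A$, $|\mathcal A|$ denotes the entrywise absolute value (modulus) and $\rho(\mathcal A)$ its spectral radius. Comparisons between matrices are entrywise. A square real matrix $\mathcal A$ is an $\mathsf M$-matrix if there exists $\alpha\in\mathbb R$ with $\alpha I - \mathcal A \ge 0$ (entrywise) and $\alpha > \rho(\alpha I - \mathcal A)$. The comparison matrix $\langle \mathcal A\rangle$ of a square matrix $\mathcal A$ is defined by $\langle \mathcal A\rangle_{i,i} := |\mathcal A_{i,i}|$ and $\langle \mathcal A\rangle_{i,j} := -|\mathcal A_{i,j}|$ for $i\ne j$. A square matrix $\mathcal A$ is an $\mathsf H$-matrix if its comparison matrix $\langle\mathcal A\rangle$ is an $\mathsf M$-matrix. *)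

(* Defs.v *)
From HB Require Import structures.
From mathcomp Require Import all_boot all_order all_algebra.
Set Implicit Arguments. Unset Strict Implicit. Unset Printing Implicit Defensive.
Import Order.TTheory GRing.Theory Num.Theory.
Local Open Scope ring_scope.

(* Complex numbers are modelled by an arbitrary numeric algebraically closed
   field C (e.g. algC, or complex R for a real closed R). *)

(* multiset of eigenvalues (roots of the characteristic polynomial, with
   multiplicity); the characteristic polynomial is monic, so it splits as
   \prod_(z <- eigvals A) ('X - z%:P). *)
Definition eigvals (C : numClosedFieldType) (n : nat) (A : 'M[C]_n) : seq C :=
  sval (closed_field_poly_normal (char_poly A)).

(* spectral radius: max modulus of eigenvalues (0 for the empty matrix) *)
Definition spectral_radius (C : numClosedFieldType) (n : nat) (A : 'M[C]_n) : C :=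
  \big[Num.max/0]_(z <- eigvals A) `|z|.

Definition mxabs (C : numClosedFieldType) (m n : nat) (A : 'M[C]_(m, n)) : 'M[C]_(m, n) :=
  \matrix_(i, j) `|A i j|.

Definition cmpmx (C : numClosedFieldType) (n : nat) (A : 'M[C]_n) : 'M[C]_n :=
  \matrix_(i, j) (if i == j then `|A i i| else - `|A i j|).

Definition is_Mmatrix (C : numClosedFieldType) (n : nat) (A : 'M[C]_n) : Prop :=
  (forall i j, A i j \is Num.real) /\
  exists alpha : C, alpha \is Num.real /\
    (forall i j, 0 <= (alpha%:M - A) i j) /\
    spectral_radius (alpha%:M - A) < alpha.

Definition is_Hmatrix (C : numClosedFieldType) (n : nat) (A : 'M[C]_n) : Prop :=
  is_Mmatrix (cmpmx A).

(* Main.v *)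
Require Import Defs.
From HB Require Import structures.
From mathcomp Require Import all_boot all_order all_algebra.
From mathcomp Require Import ring.
Import Order.TTheory GRing.Theory Num.Theory.
Local Open Scope ring_scope.

Lemma seq_max (C : numClosedFieldType) (T : eqType) (g : T -> C) (x0 : T) (s : seq T) :
  (forall x, x \in x0 :: s -> g x \is Num.real) ->
  exists2 x, x \in x0 :: s & forall y, y \in x0 :: s -> g y <= g x.
Proof.
elim: s => [|y s IH] hr.
  by exists x0 => [|y]; rewrite ?mem_head // inE => /eqP ->.
have [|x xin xmax] := IH.
  by move=> x; rewrite inE => /orP[/eqP->|xs]; apply: hr; rewrite !inE ?eqxx ?xs ?orbT.
have rx : g x \is Num.real by apply: hr; move: xin; rewrite !inE => /orP[->|->]; rewrite ?orbT.
have ry : g y \is Num.real by apply: hr; rewrite !inE eqxx orbT.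
have [hyx|hxy] := boolP (g y <= g x).
  exists x; first by move: xin; rewrite !inE => /orP[->|->]; rewrite ?orbT.
  move=> z; rewrite !inE => /or3P[/eqP->|/eqP->|zs]; first by apply: xmax; rewrite mem_head.
    by [].
  by apply: xmax; rewrite inE zs orbT.
have hxy' : g x <= g y by move: (real_leVge ry rx); rewrite (negbTE hxy).
exists y; first by rewrite !inE eqxx orbT.
move=> z; rewrite !inE => /or3P[/eqP->|/eqP->|zs] //.
  by apply: le_trans hxy'; apply: xmax; rewrite mem_head.
by apply: le_trans hxy'; apply: xmax; rewrite inE zs orbT.
Qed.

Lemma fin_max (C : numClosedFieldType) (I : finType) (g : I -> C) (i0 : I) :
  (forall i, g i \is Num.real) -> exists i, forall j, g j <= g i.
Proof.
move=> hr; have [x _ hx] := @seq_max C I g i0 (enum I) (fun x _ => hr x).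
by exists x => j; apply: hx; rewrite inE mem_enum orbT.
Qed.

Lemma sign_prod (C : numClosedFieldType) (f : C -> C) (s : seq C) :
  perm_eq s (map Num.conj s) ->
  (forall z, f z^* = (f z)^*) ->
  (forall z, z \in s -> f z != 0) ->
  (forall z, z \in s -> z \is Num.real -> 0 < f z) ->
  0 < \prod_(z <- s) f z.
Proof.
move=> + fc; move: {2}(size s) (leqnn (size s)) => k; elim: k s => [|k IH] s.
  by rewrite leqn0 => /nilP -> _ _ _; rewrite big_nil ltr01.
case: s => [|z s] hs hp hnz hre; first by rewrite big_nil ltr01.
rewrite big_cons.
have [zr|znr] := boolP (z \is Num.real).
  have zc : z^* = z by apply/eqP; rewrite -CrealE.
  move: hp; rewrite /= zc perm_cons => hp.
  apply: mulr_gt0; first by apply: hre; rewrite ?mem_head.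
  apply: IH => //.
    by move=> y ys; apply: hnz; rewrite inE ys orbT.
  by move=> y ys; apply: hre; rewrite inE ys orbT.
have zc : z^* != z by rewrite -CrealE.
have zin : z^* \in s.
  have : z^* \in z :: s.
    by rewrite (perm_mem hp) /= inE eqxx.
  by rewrite inE (negbTE zc).
have ps := perm_to_rem zin.
rewrite (perm_big _ ps) big_cons mulrA.
set s' := rem z^* s in ps *.
apply: mulr_gt0.
  rewrite fc -normCK exprn_gt0 // normr_gt0; apply: hnz; exact: mem_head.
have ins y : y \in s' -> y \in z :: s.
  by move=> ys; rewrite inE (perm_mem ps) inE ys !orbT.
apply: IH.
- by move: hs; rewrite /= (perm_size ps) /= ltnS => /ltnW.
- have h1 : perm_eq (z :: z^* :: s') (z^* :: z :: map Num.conj s').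
    have e1 : perm_eq (z :: s) (z :: z^* :: s') by rewrite perm_cons.
    have e2 : perm_eq (map Num.conj (z :: s)) (map Num.conj (z :: z^* :: s')) by apply: perm_map.
    move: e2; rewrite /= conjCK => e2.
    rewrite perm_sym in e1.
    exact: perm_trans (perm_trans e1 hp) e2.
  have sw : perm_eq ([:: z^*] ++ [:: z] ++ map Num.conj s') ([:: z] ++ [:: z^*] ++ map Num.conj s').
    by apply/permPl/perm_catCA.
  by move: (perm_trans h1 sw); rewrite /= !perm_cons.
- by move=> y /ins; apply: hnz.
- by move=> y /ins; apply: hre.
Qed.

Lemma eig_prod (C : numClosedFieldType) n (B : 'M[C]_n) :
  char_poly B = \prod_(z <- eigvals B) ('X - z%:P).
Proof.
rewrite /eigvals; case: closed_field_poly_normal => s /= hs.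
by rewrite {1}hs (monicP (char_poly_monic B)) scale1r.
Qed.

Lemma char_horner (C : numClosedFieldType) n (B : 'M[C]_n) t :
  (char_poly B).[t] = \det (t%:M - B).
Proof.
rewrite -horner_evalE /char_poly -det_map_mx; congr (\det _).
apply/matrixP => i j; rewrite !mxE /=.
by rewrite horner_evalE hornerD hornerN hornerMn hornerX hornerC.
Qed.

Lemma eig_det (C : numClosedFieldType) n (B : 'M[C]_n) t :
  \det (t%:M - B) = \prod_(z <- eigvals B) (t - z).
Proof.
rewrite -char_horner eig_prod horner_prod; apply: eq_bigr => z _.
by rewrite hornerXsubC.
Qed.

Lemma eig_root (C : numClosedFieldType) n (B : 'M[C]_n) z :
  z \in eigvals B -> \det (z%:M - B) = 0.
Proof.
move=> zin; rewrite -char_horner eig_prod; apply/eqP.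
by rewrite -/(root _ z) root_prod_XsubC.
Qed.

Lemma eig_conj (C : numClosedFieldType) n (B : 'M[C]_n) :
  (forall i j, B i j \is Num.real) ->
  perm_eq (eigvals B) (map Num.conj (eigvals B)).
Proof.
move=> hr; apply: prod_XsubC_eq; rewrite -eig_prod big_map.
have -> : \prod_(j <- eigvals B) ('X - (j^*)%:P) = map_poly Num.conj (char_poly B).
  rewrite eig_prod rmorph_prod; apply: eq_bigr => z _.
  by rewrite /= map_polyXsubC.
rewrite map_char_poly; congr char_poly; apply/matrixP => i j; rewrite mxE.
by apply/esym/eqP; rewrite /= -CrealE.
Qed.

Lemma schur (C : numClosedFieldType) m (a : C) (r : 'M[C]_(1,m)) (c : 'M[C]_(m,1)) (X : 'M[C]_m) :
  X \in unitmx ->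
  \det (block_mx a%:M r c X : 'M_(1 + m)) = (a - (r *m invmx X *m c) 0 0) * \det X.
Proof.
move=> hX.
have -> : block_mx a%:M r c X = block_mx 1%:M (r *m invmx X) 0 1%:M *m
            block_mx (a%:M - r *m invmx X *m c) 0 c X.
  rewrite mulmx_block !mul1mx !mul0mx !add0r mulmxKV // subrK.
  by [].
rewrite det_mulmx det_ublock det_lblock !det1 !mul1r det_mx11 !mxE eqxx mulr1n.
by [].
Qed.

Lemma schur_char (C : numClosedFieldType) m (B : 'M[C]_(1 + m)) t :
  (t%:M - drsubmx B) \in unitmx ->
  \det (t%:M - B) = (t - B 0 0 - (ursubmx B *m invmx (t%:M - drsubmx B) *m dlsubmx B) 0 0)
                     * \det (t%:M - drsubmx B).
Proof.
move=> hX.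
have -> : t%:M - B = block_mx (t - B 0 0)%:M (- ursubmx B) (- dlsubmx B) (t%:M - drsubmx B).
  rewrite -{1}[B]submxK (scalar_mx_block 1 m t) opp_block_mx add_block_mx !sub0r.
  congr block_mx; apply/matrixP => i j; rewrite !mxE !ord1 /=.
  by rewrite !mulr1n; congr (_ - B _ _); apply/val_inj.
rewrite schur // mulNmx mulmxN !mulNmx opprK.
by [].
Qed.

Lemma realV_ {C : numClosedFieldType} {x : C} : x \is Num.real -> x^-1 \is Num.real.
Proof. by rewrite !realE invr_ge0 invr_le0. Qed.

Lemma det_real (C : numClosedFieldType) n (X : 'M[C]_n) :
  (forall i j, X i j \is Num.real) -> \det X \is Num.real.
Proof.
move=> hr; rewrite /determinant; apply: rpred_sum => s _.
apply: rpredM; first by apply: rpredX; rewrite rpredN rpred1.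
by apply: rpred_prod => i _.
Qed.

Lemma invmx_real (C : numClosedFieldType) n (X : 'M[C]_n) :
  (forall i j, X i j \is Num.real) -> forall i j, invmx X i j \is Num.real.
Proof.
move=> hr i j; rewrite /invmx; case: ifP => _; last exact: hr.
rewrite !mxE; apply: rpredM; first by apply: realV_; apply: det_real.
rewrite /cofactor; apply: rpredM; first by apply: rpredX; rewrite rpredN rpred1.
by apply: det_real => k l; rewrite !mxE.
Qed.

Lemma mul_real (C : numClosedFieldType) m n p (X : 'M[C]_(m,n)) (Y : 'M[C]_(n,p)) :
  (forall i j, X i j \is Num.real) -> (forall i j, Y i j \is Num.real) ->
  forall i j, (X *m Y) i j \is Num.real.
Proof.
by move=> hx hy i j; rewrite mxE; apply: rpred_sum => k _; apply: rpredM.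
Qed.

Lemma zmat_nonneg (C : numClosedFieldType) n (Q : 'M[C]_n) (u x : 'cV[C]_n) (strict : bool) :
  (forall i j, i != j -> Q i j <= 0) ->
  (forall i, 0 < u i 0) -> (forall i, 0 < (Q *m u) i 0) ->
  (forall i, x i 0 \is Num.real) ->
  (forall i, if strict then 0 < (Q *m x) i 0 else 0 <= (Q *m x) i 0) ->
  forall i, if strict then 0 < x i 0 else 0 <= x i 0.
Proof.
move=> hZ hu hQu hx hQx i0.
have ru j : u j 0 \is Num.real by apply: gtr0_real.
have hr j : - (x j 0 / u j 0) \is Num.real by rewrite rpredN rpredM ?realV_.
have [i hi] := @fin_max C _ (fun j => - (x j 0 / u j 0)) i0 hr.
set mu := x i 0 / u i 0 in hi.
have hmu : mu \is Num.real by rewrite rpredM ?realV_.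
have hge j : mu * u j 0 <= x j 0.
  have := hi j; rewrite lerN2 -(ler_pM2r (hu j)) divfK //.
  by rewrite gt_eqF // hu.
have key : (Q *m x) i 0 - mu * (Q *m u) i 0 <= 0.
  rewrite !mxE mulr_sumr -sumrB; apply: sumr_le0 => j _.
  rewrite mulrCA -mulrBr.
  have [eij|nij] := eqVneq i j.
    by rewrite -eij /mu divfK ?subrr ?mulr0 // gt_eqF // hu.
  by apply: mulr_le0_ge0; [exact: hZ | rewrite subr_ge0].
rewrite subr_le0 in key.
have := hQx i; have := hge i0; move: hQx; case: strict => _ h1 h2.
  have : 0 < mu * (Q *m u) i 0 by apply: lt_le_trans key.
  rewrite pmulr_lgt0 // => mpos.
  by apply: lt_le_trans h1; rewrite mulr_gt0.
have : 0 <= mu * (Q *m u) i 0 by apply: le_trans key.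
rewrite pmulr_lge0 // => mpos.
by apply: le_trans h1; rewrite mulr_ge0 // ltW.
Qed.

Lemma poly_cont_right (C : numClosedFieldType) (p : {poly C}) x :
  x \is Num.real -> p.[x] < 0 ->
  (forall t, t \is Num.real -> x < t -> 0 <= p.[t]) -> False.
Proof.
move=> xr px hp.
have : root (p - p.[x]%:P) x by rewrite /root hornerD hornerN hornerC subrr.
case/factor_theorem => q hq.
pose K := \sum_(i < size q) `|q`_i| * (`|x| + 1) ^+ i.
have K0 : 0 <= K by apply: sumr_ge0 => i _; rewrite mulr_ge0 // exprn_ge0 // addr_ge0.
set e := - p.[x].
have e0 : 0 < e by rewrite oppr_gt0.
have Ke : 0 < K + e by apply: (lt_le_trans e0); rewrite lerDr.
have den0 : 0 < K + e + 1 by rewrite addr_gt0.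
pose d := e / (K + e + 1).
have d0 : 0 < d by rewrite divr_gt0.
have d1 : d <= 1.
  rewrite ler_pdivrMr // mul1r; apply: (le_trans (_ : e <= K + e)); first by rewrite lerDr.
  by rewrite lerDl.
have dK : d * K < e.
  rewrite /d mulrAC ltr_pdivrMr // mulrDr mulrDr mulr1 -addrA ltrDl.
  by rewrite addr_gt0 // mulr_gt0.
have tr : x + d \is Num.real by rewrite rpredD // gtr0_real.
have ht := hp _ tr; rewrite ltrDl in ht; have {ht} := ht d0.
have : p.[x + d] - p.[x] = q.[x + d] * d.
  have := congr1 (fun r => r.[x + d]) hq; rewrite /= hornerD hornerN hornerC => ->.
  by rewrite hornerM hornerXsubC addrAC subrr add0r.
move=> hdiff ht.
have hq_le : `|q.[x + d]| <= K.
  rewrite horner_coef; apply: le_trans (ler_norm_sum _ _ _) _.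
  apply: ler_sum => i _; rewrite normrM normrX ler_wpM2l //.
  apply: lerXn2r; rewrite ?nnegrE ?addr_ge0 //.
  by apply: le_trans (ler_normD _ _) _; rewrite lerD2l ger0_norm // ltW.
have : `|p.[x + d] - p.[x]| < e.
  rewrite hdiff normrM (gtr0_norm d0); apply: le_lt_trans dK.
  by rewrite mulrC ler_wpM2l // ltW.
have rr : p.[x + d] - p.[x] \is Num.real by rewrite rpredB ?(ger0_real ht) ?(ltr0_real px).
move/(le_lt_trans (real_ler_norm rr)); rewrite /e ltrBlDr addNr.
by move/lt_le_trans/(_ ht); rewrite ltxx.
Qed.

Lemma char_block (C : numClosedFieldType) m (B : 'M[C]_(1 + m)) t :
  t%:M - B = block_mx (t - B 0 0)%:M (- ursubmx B) (- dlsubmx B) (t%:M - drsubmx B).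
Proof.
rewrite -{1}[B]submxK (scalar_mx_block 1 m t) opp_block_mx add_block_mx !sub0r.
congr block_mx; apply/matrixP => i j; rewrite !mxE !ord1 /=.
by rewrite !mulr1n; congr (_ - B _ _); apply/val_inj.
Qed.

Lemma pos_det_noroot (C : numClosedFieldType) n (B : 'M[C]_n) t :
  (forall i j, B i j \is Num.real) -> t \is Num.real ->
  (forall z, z \in eigvals B -> z \is Num.real -> z < t) ->
  0 < \det (t%:M - B).
Proof.
move=> hr tr hz; rewrite eig_det; apply: sign_prod.
- exact: eig_conj.
- have tc : t^* = t by apply/eqP; rewrite -CrealE.
  by move=> z; rewrite rmorphB /= tc.
- move=> z zin; rewrite subr_eq0; apply/eqP => ezt.
  by move: (hz z zin); rewrite -ezt ltxx => /(_ tr).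
- by move=> z zin zr; rewrite subr_gt0; apply: hz.
Qed.

Lemma mmat_semipos (C : numClosedFieldType) n :
  forall (B : 'M[C]_n) (a : C), (forall i j, 0 <= B i j) -> a \is Num.real ->
  (forall t, t \is Num.real -> a <= t -> 0 < \det (t%:M - B)) ->
  exists u : 'cV[C]_n, (forall i, 0 < u i 0) /\ (forall i, 0 < ((a%:M - B) *m u) i 0).
Proof.
elim: n => [|m IH] B a hB ha hH.
  by exists 0; split => -[].
have {}IH := IH.
pose B1 : 'M[C]_(1 + m) := B.
pose B' := drsubmx B1.
pose r := ursubmx B1.
pose c := dlsubmx B1.
have hBr i j : B i j \is Num.real by apply: ger0_real.
have hB'r i j : B' i j \is Num.real by rewrite /B' !mxE; exact: hBr.
have hB'0 i j : 0 <= B' i j by rewrite /B' !mxE; exact: hB.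
have hr0 i j : 0 <= r i j by rewrite /r !mxE; exact: hB.
have hc0 i j : 0 <= c i j by rewrite /c !mxE; exact: hB.
have solve (t : C) : t \is Num.real -> (exists u : 'cV[C]_m, (forall i, 0 < u i 0) /\ (forall i, 0 < ((t%:M - B') *m u) i 0)) ->
   forall y : 'cV[C]_m, (forall i, y i 0 \is Num.real) ->
     forall strict : bool, (forall i, if strict then 0 < y i 0 else 0 <= y i 0) ->
     (t%:M - B') \in unitmx ->
     forall i, if strict then 0 < (invmx (t%:M - B') *m y) i 0 else 0 <= (invmx (t%:M - B') *m y) i 0.
  move=> tr [u [hu hXu]] y yr strict hy hX.
  apply: (@zmat_nonneg C m (t%:M - B') u) => //.
  - by move=> i j nij; rewrite !mxE (negbTE nij) mulr0n sub0r oppr_le0.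
  - move=> i; apply: mul_real; last by move=> k l; rewrite ord1.
    apply: invmx_real => i' j'; rewrite !mxE rpredB //.
    by case: (i' == j'); rewrite ?mulr1n ?mulr0n ?rpred0.
  - by move=> i; rewrite mulKVmx.
have unitX t : 0 < \det (t%:M - B') -> (t%:M - B') \in unitmx.
  by move=> hd; rewrite unitmxE unitfE gt_eqF.
have schurB t : (t%:M - B') \in unitmx ->
   \det (t%:M - B) = (t - B 0 0 - (r *m invmx (t%:M - B') *m c) 0 0) * \det (t%:M - B').
  by move=> hX; apply: (@schur_char C m B1 t).
have hB' : forall t, t \is Num.real -> a <= t -> 0 < \det (t%:M - B').
  move=> t0 t0r at0.
  pose R := [seq z <- eigvals B' | (z \is Num.real) && (t0 <= z)].
  case hR : R => [|z1 R'].
    apply: pos_det_noroot => // z zin zr.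
    have : z \notin R by rewrite hR.
    rewrite mem_filter zin zr andbT /= => hz.
    by rewrite real_ltNge.
  have inR x : x \in z1 :: R' -> [&& x \is Num.real, t0 <= x & x \in eigvals B'].
    by rewrite -hR mem_filter andbA.
  have [smax sin smax_max] : exists2 x, x \in z1 :: R' & forall y, y \in z1 :: R' -> id y <= id x.
    by apply: seq_max => x /inR /and3P[].
  have /and3P[smr t0s sme] := inR _ sin.
  have hpos t : t \is Num.real -> smax < t -> 0 < \det (t%:M - B').
    move=> tr st; apply: pos_det_noroot => // z zin zr.
    have [t0z|] := boolP (t0 <= z).
      have : z \in z1 :: R' by rewrite -hR mem_filter zr t0z zin.
      by move/smax_max => /= zs; apply: le_lt_trans st.
    rewrite -real_ltNge // => zt0.
    by apply: lt_le_trans (ltW (le_lt_trans t0s st)).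
  exfalso.
  pose h := ('X - (B 0 0)%:P) * char_poly B' - char_poly B.
  have hev t : h.[t] = (t - B 0 0) * \det (t%:M - B') - \det (t%:M - B).
    by rewrite /h hornerD hornerN hornerM hornerXsubC !char_horner.
  apply: (@poly_cont_right C h smax smr).
    rewrite hev (@eig_root _ _ _ _ sme) mulr0 sub0r oppr_lt0; apply: hH => //.
    exact: le_trans at0 t0s.
  move=> t tr st; have dpos := hpos t tr st; have hX := unitX t dpos.
  rewrite hev (schurB t hX).
  have -> : forall a b d : C, a * d - (a - b) * d = b * d by move=> *; ring.
  apply: mulr_ge0; last exact: ltW.
  have hIH := IH B' t hB'0 tr (fun t' t'r tt' => hpos t' t'r (lt_le_trans st tt')).
  have cr i : c i 0 \is Num.real by apply: ger0_real.
  have hx := solve t tr hIH c cr false (fun i => hc0 i 0) hX.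
  rewrite -mulmxA mxE; apply: sumr_ge0 => k _; apply: mulr_ge0 => //.
have dX := hB' a ha (lexx a).
have hX := unitX a dX.
have hIH := IH B' a hB'0 ha hB'.
set X := a%:M - B' in dX hX hIH.
have dB := hH a ha (lexx a).
rewrite (schurB a hX) pmulr_lgt0 // in dB.
set w := (r *m invmx X *m c) 0 0 in dB.
set sigma := a - B 0 0 - w in dB.
pose one : 'cV[C]_m := const_mx 1.
pose wv := invmx X *m one.
pose xv := invmx X *m c.
have cr i : c i 0 \is Num.real by apply: ger0_real.
have hxv i : 0 <= xv i 0 := solve a ha hIH c cr false (fun i => hc0 i 0) hX i.
have hwv i : 0 < wv i 0.
  apply: (solve a ha hIH one _ true _ hX i) => j; rewrite mxE ?rpred1 //.
pose k := (r *m wv) 0 0.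
have k0 : 0 <= k.
  rewrite /k mxE; apply: sumr_ge0 => j _; apply: mulr_ge0 => //; exact: ltW.
pose eps := sigma / (k + 1).
have k1 : 0 < k + 1 by rewrite ltr_wpDl.
have eps0 : 0 < eps by rewrite divr_gt0.
pose y := xv + eps *: wv.
exists (col_mx (const_mx 1 : 'cV[C]_1) y : 'cV[C]_(1 + m)).
have eQ : a%:M - B = block_mx (a - B 0 0)%:M (- r) (- c) X := @char_block C m B1 a.
rewrite eQ.
change ((forall i : 'I_(1+m), 0 < (col_mx (const_mx 1 : 'cV[C]_1) y : 'cV_(1+m)) i 0) /\
  (forall i : 'I_(1+m), 0 < ((block_mx (a - B 0 0)%:M (- r) (- c) X : 'M_(1+m)) *m
      (col_mx (const_mx 1 : 'cV[C]_1) y : 'cV_(1+m))) i 0)).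
rewrite mul_block_col.
split => i; case: (@split_ordP 1 m i) => j ->; rewrite ?col_mxEu ?col_mxEd.
- by rewrite mxE ltr01.
- rewrite /y mxE [(eps *: wv) j 0]mxE; apply: ltr_wpDl; first exact: hxv.
  by rewrite mulr_gt0.
- rewrite ord1 mul_scalar_mx.
  have -> : - r *m y = - (r *m invmx X *m c + eps *: (r *m wv)).
    rewrite /y /xv mulmxDr -scalemxAr mulmxA !(mulNmx r) (mulNmx (r *m invmx X)).
    by rewrite scalerN opprD.
  have e1 : ((a - B 0 0) *: (const_mx 1 : 'cV[C]_1)) 0 0 = a - B 0 0 by rewrite !mxE mulr1.
  have e2 : (- (r *m invmx X *m c + eps *: (r *m wv))) 0 0 = - (w + eps * k) by rewrite /w /k !mxE.
  rewrite mxE e1 e2.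
  rewrite opprD addrA -/sigma /eps.
  have -> : sigma - sigma / (k + 1) * k = sigma / (k + 1).
    by field; rewrite gt_eqF.
  by rewrite divr_gt0.
- have c1 : const_mx 1 = 1%:M :> 'M[C]_1 by apply/matrixP => i' k'; rewrite !ord1 !mxE.
  rewrite c1 mulmx1 /y /xv mulmxDr -scalemxAr !mulKVmx // addKr mxE /one mxE mulr1.
  exact: eps0.
Qed.

Lemma maxr_lt1 (C : numClosedFieldType) (x y : C) : x < 1 -> y < 1 -> Num.max x y < 1.
Proof. by rewrite /Order.max; case: ifP. Qed.

Lemma le_maxr_l {C : numClosedFieldType} {x y : C} : x \is Num.real -> y \is Num.real ->
  x <= Num.max x y /\ y <= Num.max x y.
Proof.
move=> xr yr; rewrite /Order.max; case: ifP => h; first by split => //; exact: ltW.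
by split => //; rewrite real_leNgt ?h.
Qed.

Lemma rho_lt1 (C : numClosedFieldType) n (G : 'M[C]_n) :
  (forall z, z \in eigvals G -> `|z| < 1) -> spectral_radius G < 1.
Proof.
rewrite /spectral_radius; elim: (eigvals G) => [|z s IH] h; first by rewrite big_nil ltr01.
rewrite big_cons; apply: maxr_lt1; first by apply: h; rewrite mem_head.
by apply: IH => y ys; apply: h; rewrite inE ys orbT.
Qed.

Lemma bigmax_ge0 (C : numClosedFieldType) (s : seq C) : 0 <= \big[Num.max/0]_(j <- s) `|j|.
Proof.
elim: s => [|x s IHs]; first by rewrite big_nil.
rewrite big_cons; case: (le_maxr_l (normr_real x) (ger0_real IHs)) => _ h2.
exact: le_trans IHs h2.
Qed.

Lemma rho_ge (C : numClosedFieldType) n (G : 'M[C]_n) z :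
  z \in eigvals G -> `|z| <= spectral_radius G.
Proof.
rewrite /spectral_radius; elim: (eigvals G) => [|y s IH] //.
have ge0 := @bigmax_ge0 C s.
have [h1 h2] := le_maxr_l (normr_real y) (ger0_real ge0).
rewrite inE big_cons => /orP[/eqP->|zs] //.
exact: le_trans (IH zs) h2.
Qed.

Lemma eig_bound (C : numClosedFieldType) n (G : 'M[C]_n) (u : 'cV[C]_n) :
  (forall i, 0 < u i 0) -> (forall i j, 0 <= G i j) -> (forall i, (G *m u) i 0 < u i 0) ->
  forall z, z \in eigvals G -> `|z| < 1.
Proof.
move=> hu hG hGu z zin.
have d0 := @eig_root C n G z zin.
rewrite -det_tr linearB /= tr_scalar_mx in d0.
have /det0P [v vnz hv] : \det (z%:M - G^T) == 0 by rewrite d0.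
have hv' i : \sum_j v 0 j * G i j = z * v 0 i.
  move/matrixP: hv => /(_ 0 i); rewrite mulmxBr mul_mx_scalar !mxE => /eqP.
  rewrite subr_eq0 => /eqP ->; by apply: eq_bigr => j _; rewrite mxE.
have [k hk] : exists k, v 0 k != 0.
  case: (pickP (fun k => v 0 k != 0)) => [k hk|h]; first by exists k.
  case/negP: vnz; apply/eqP/matrixP => i j; rewrite ord1 !mxE.
  by move: (h j) => /negbFE /eqP.
have ru j : u j 0 \is Num.real by apply: gtr0_real.
have hr j : `|v 0 j| / u j 0 \is Num.real by rewrite rpredM ?normr_real ?realV_.
have [i hi] := @fin_max C _ (fun j => `|v 0 j| / u j 0) k hr.
set t := `|v 0 i| / u i 0 in hi.
have t0 : 0 < t.
  apply: lt_le_trans (hi k); rewrite divr_gt0 // normr_gt0 //.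
have vt j : `|v 0 j| <= t * u j 0.
  by have := hi j; rewrite ler_pdivrMr.
have vi : `|v 0 i| = t * u i 0 by rewrite /t divfK // gt_eqF.
have key : `|z| * `|v 0 i| < `|v 0 i|.
  rewrite -normrM -hv'; apply: le_lt_trans (ler_norm_sum _ _ _) _.
  apply: (@le_lt_trans _ _ (t * (G *m u) i 0)).
    rewrite mxE mulr_sumr; apply: ler_sum => j _.
    rewrite normrM (ger0_norm (hG i j)) mulrC mulrCA ler_wpM2l //.
  by rewrite vi ltr_pM2l.
by rewrite gtr_pMl // in key; rewrite vi mulr_gt0.
Qed.

Lemma mxsubE (C : numClosedFieldType) m n (X Y : 'M[C]_(m,n)) i j : (X - Y) i j = X i j - Y i j.
Proof. by rewrite !mxE. Qed.

Lemma contraction (C : numClosedFieldType) n (A M : 'M[C]_n) (u : 'cV[C]_n) :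
  M \in unitmx -> cmpmx M - mxabs (M - A) = cmpmx A ->
  (forall i, 0 < u i 0) -> (forall i, 0 < (cmpmx A *m u) i 0) ->
  forall y : 'cV[C]_n, (forall j, `|y j 0| <= u j 0) ->
  forall p, `|(invmx M *m (M - A) *m y) p 0| < u p 0.
Proof.
move=> hM hMA hu hAu y hy p.
set N := M - A.
set x := invmx M *m N *m y.
have Mx : M *m x = N *m y by rewrite /x -!mulmxA mulKVmx.
have ru j : u j 0 \is Num.real by apply: gtr0_real.
have hr j : `|x j 0| / u j 0 \is Num.real by rewrite rpredM ?normr_real ?realV_.
have [i hi] := @fin_max C _ (fun j => `|x j 0| / u j 0) p hr.
set t := `|x i 0| / u i 0 in hi.
have xt j : `|x j 0| <= t * u j 0 by have := hi j; rewrite ler_pdivrMr.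
have xi : `|x i 0| = t * u i 0 by rewrite /t divfK // gt_eqF.
have t0 : 0 <= t by rewrite /t divr_ge0 // ltW.
rewrite real_ltNge ?normr_real // ; apply/negP => hup.
have t1 : 1 <= t.
  apply: le_trans (hi p); rewrite ler_pdivlMr // mul1r.
  exact: hup.
set S := (mxabs N *m u) i 0.
set D := (cmpmx A *m u) i 0.
have S0 : 0 <= S by rewrite /S mxE; apply: sumr_ge0 => j _; rewrite mxE mulr_ge0 // ltW.
have hMu : (cmpmx M *m u) i 0 = S + D.
  by rewrite /S /D -hMA mulmxBl mxsubE addrC subrK.
set R := \sum_(j | j != i) `|M i j| * u j 0.
have hMu2 : (cmpmx M *m u) i 0 = `|M i i| * u i 0 - R.
  rewrite mxE (bigD1 i) //= mxE eqxx /R -sumrN; congr (_ + _).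
  by apply: eq_bigr => j ji; rewrite mxE eq_sym (negbTE ji) mulNr.
have row : M i i * x i 0 = (N *m y) i 0 - \sum_(j | j != i) M i j * x j 0.
  have := congr1 (fun X : 'cV[C]_n => X i 0) Mx; rewrite /= mxE (bigD1 i) //= => <-.
  by rewrite addrK.
have ineq : `|M i i| * (t * u i 0) <= S + t * R.
  rewrite -xi -normrM row; apply: le_trans (ler_normB _ _) _.
  apply: lerD.
    rewrite mxE /S mxE; apply: le_trans (ler_norm_sum _ _ _) _; apply: ler_sum => j _.
    by rewrite normrM /mxabs /N !mxE ler_wpM2l.
  apply: le_trans (ler_norm_sum _ _ _) _; rewrite /R mulr_sumr; apply: ler_sum => j _.
  by rewrite normrM mulrCA ler_wpM2l.
have : t * (S + D) <= S.
  rewrite -hMu hMu2 mulrBr lerBlDr; apply: le_trans ineq; rewrite mulrCA.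
  by [].
have SD : 0 < S + D by apply: ltr_wpDl S0 (hAu i).
have : S + D <= t * (S + D) by rewrite ler_peMl // ltW.
move=> h1 h2; have := le_trans h1 h2; rewrite gerDl => hD.
by have := lt_le_trans (hAu i) hD; rewrite ltxx.
Qed.

Lemma T_factor (C : numClosedFieldType) n (A M F : 'M[C]_n) :
  M \in unitmx -> F \in unitmx ->
  1%:M - invmx F *m (M + F - A) *m invmx M *m A =
  (invmx F *m (F - A)) *m (invmx M *m (M - A)).
Proof.
move=> hM hF.
set P := invmx F *m A; set Q := invmx M *m A.
have e1 : invmx F *m (F - A) = 1%:M - P by rewrite mulmxBr mulVmx.
have e2 : invmx M *m (M - A) = 1%:M - Q by rewrite mulmxBr mulVmx.
have e3 : invmx F *m (M + F - A) *m invmx M *m A = P + Q - P *m Q.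
  rewrite -!mulmxA -/Q !mulmxBl !mulmxDl !mulmxBr !mulmxDr mulKVmx //.
  by rewrite mulmxA mulVmx // mul1mx !mulmxA.
rewrite e1 e2 e3 mulmxBl !mulmxBr !mul1mx mulmx1.
rewrite !opprD !opprK !addrA; congr (_ + _).
by rewrite addrAC.
Qed.

Theorem corollary1 (C : numClosedFieldType) (n : nat) (A M F : 'M[C]_n)
  (hM : M \in unitmx) (hF : F \in unitmx)
  (hA : is_Hmatrix A)
  (hMA : cmpmx M - mxabs (M - A) = cmpmx A)
  (hFA : cmpmx F - mxabs (F - A) = cmpmx A) :
  spectral_radius
    (mxabs (1%:M - invmx F *m (M + F - A) *m invmx M *m A)) < 1.
Proof.
case: hA => [_ [al [alr [hB hrho]]]].
set B := al%:M - cmpmx A in hB hrho.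
have hBr i j : B i j \is Num.real by apply: ger0_real.
have hH t : t \is Num.real -> al <= t -> 0 < \det (t%:M - B).
  move=> tr alt; apply: pos_det_noroot => // z zin zr.
  have h1 := real_ler_norm zr.
  have h2 := @rho_ge _ _ _ _ zin.
  exact: le_lt_trans h1 (le_lt_trans h2 (lt_le_trans hrho alt)).
have [u [hu hAu]] := @mmat_semipos C n B al hB alr hH.
have eB : al%:M - B = cmpmx A by rewrite /B opprB addrC subrK.
rewrite eB in hAu.
set T := 1%:M - _.
have hT : forall y : 'cV[C]_n, (forall j, `|y j 0| <= u j 0) -> forall i, `|(T *m y) i 0| < u i 0.
  move=> y hy i; rewrite /T T_factor // -(mulmxA (invmx F *m (F - A))).
  apply: (@contraction _ _ _ _ _ hF hFA hu hAu) => j.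
  exact: ltW (@contraction _ _ _ _ _ hM hMA hu hAu _ hy j).
clearbody T.
have hTu i : (mxabs T *m u) i 0 < u i 0.
  pose y : 'cV[C]_n := \col_j (if T i j == 0 then 0 else u j 0 * (T i j)^* / `|T i j|).
  have hy j : `|y j 0| <= u j 0.
    rewrite /y mxE; case: eqP => hT0; first by rewrite normr0 ltW.
    have nT : `|T i j| != 0 by rewrite normr_eq0; apply/eqP.
    rewrite !normrM normrV ?unitfE // normr_id norm_conjC mulfK //.
    by rewrite gtr0_norm.
  apply: le_lt_trans (hT y hy i).
  have -> : (T *m y) i 0 = (mxabs T *m u) i 0.
    rewrite /mxabs !mxE; apply: eq_bigr => j _; rewrite /y !mxE.
    case: eqP => [->|/eqP Tn0]; first by rewrite normr0 !mul0r.
    rewrite (_ : T i j * (u j 0 * (T i j)^* / `|T i j|) = u j 0 * (T i j * (T i j)^*) / `|T i j|); last by ring.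
    by rewrite -normCK expr2 mulrA mulfK ?normr_eq0 // mulrC.
  apply: real_ler_norm; rewrite /mxabs mxE; apply: rpred_sum => j _.
  by rewrite mxE rpredM ?normr_real ?gtr0_real.
apply: rho_lt1; apply: (@eig_bound _ _ _ _ hu) => //.
by move=> i j; rewrite /mxabs mxE.
Qed.
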